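(* Let $\mathcal{G}$ be a GBS graph of groups and $w=a_0^{k_0}y_1a_1^{k_1}\cdots y_na_n^{k_n}$ a $\mathcal{G}$-factorization. If $w$ represents an element of the subgroup $\langle a_0\rangle$ of $F(\mathcal{G})$, then $w=a_0^k$ in $F(\mathcal{G})$ for $$k=\sum_{\nu=0}^n k_\nu\cdot\prod_{\mu=1}^{\nu}\frac{\alpha_\mu}{\beta_\mu},$$ where $\alpha_\mu=\alpha_{y_\mu}$ and $\beta_\mu=\beta_{y_\mu}$ for $1\le\mu\le n$.
   Context: $\mathcal{G}$ consists of a finite connected graph $Y$ (vertices $V(Y)$, edges $E(Y)$, maps $\iota,\tau:E(Y)\to V(Y)$, fixed-point-free involution $y\mapsto\bar y$ with $\iota(\bar y)=\tau(y)$) and integers $\alpha_y,\beta_y\in\mathbb{Z}\setminus\{0\}$ with $\alpha_y=\beta_{\bar y}$. $F(\mathcal{G})$ is the group with generators $V(Y)\cup E(Y)$ and relations $\bar yy=1$, $y\,b^{\beta_y}\bar y=a^{\alpha_y}$ for each $y\in E(Y)$ with $a=\iota(y)$, $b=\tau(y)$. A $\mathcal{G}$-factorization is a word $a_0^{k_0}y_1a_1^{k_1}\cdots y_na_n^{k_n}$ with $y_i\in E(Y)$, $a_i\in V(Y)$, $k_i\in\mathbb{Z}$, $\iota(y_i)=a_{i-1}$, $\tau(y_i)=a_i$ for $1\le i\le n$ and $a_n=a_0$. *)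

(* Defs.v *)
From mathcomp Require Import all_boot all_order all_algebra.
Set Implicit Arguments. Unset Strict Implicit. Unset Printing Implicit Defensive.
Import Order.TTheory GRing.Theory Num.Theory.

Record grp := Grp {
  gcar :> Type;
  gmul : gcar -> gcar -> gcar;
  ginv : gcar -> gcar;
  gone : gcar;
  gmulA : forall x y z, gmul x (gmul y z) = gmul (gmul x y) z;
  gmul1 : forall x, gmul gone x = x;
  gmulV : forall x, gmul (ginv x) x = gone
}.

Fixpoint gexpn (H : grp) (x : H) (n : nat) : H :=
  match n with O => gone H | S m => gmul x (gexpn x m) end.

Definition gexpz (H : grp) (x : H) (z : int) : H :=
  match z with
  | Posz n => gexpn x n
  | Negz n => ginv (gexpn x n.+1)
  end.

Definition Y_adj (V E : finType) (iota tau : E -> V) : rel V :=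
  fun u v => [exists y : E, (iota y == u) && (tau y == v)].

Definition Y_connected (V E : finType) (iota tau : E -> V) : Prop :=
  forall u v : V, connect (Y_adj iota tau) u v.

Definition is_GBS (V E : finType) (iota tau : E -> V) (bar : E -> E)
  (alpha beta : E -> int) : Prop :=
  Y_connected iota tau /\
  (forall y, bar (bar y) = y) /\
  (forall y, bar y <> y) /\
  (forall y, iota (bar y) = tau y) /\
  (forall y, alpha y <> 0 /\ beta y <> 0) /\
  (forall y, alpha y = beta (bar y)).

Definition F_model (V E : finType) (iota tau : E -> V) (bar : E -> E)
  (alpha beta : E -> int) (H : grp) (f : V -> H) (g : E -> H) : Prop :=
  (forall y, gmul (g (bar y)) (g y) = gone H) /\
  (forall y, gmul (gmul (g y) (gexpz (f (tau y)) (beta y))) (g (bar y))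
             = gexpz (f (iota y)) (alpha y)).

Inductive letter (V E : Type) := LV of V & int | LE of E.

Fixpoint eval_word (V E : Type) (H : grp) (f : V -> H) (g : E -> H)
  (w : list (letter V E)) : H :=
  match w with
  | nil => gone H
  | cons (LV a z) w' => gmul (gexpz (f a) z) (eval_word f g w')
  | cons (LE y) w' => gmul (g y) (eval_word f g w')
  end.

(* Equality of two words in the presented group F(G): they are equal in
   F(G) iff they evaluate equally under every interpretation of the
   generators satisfying the defining relations (universal property). *)
Definition F_eq (V E : finType) (iota tau : E -> V) (bar : E -> E)
  (alpha beta : E -> int) (w1 w2 : list (letter V E)) : Prop :=
  forall (H : grp) (f : V -> H) (g : E -> H),
    F_model iota tau bar alpha beta f g -> eval_word f g w1 = eval_word f g w2.

(* The word a_0^{k_0} y_1 a_1^{k_1} ... y_n a_n^{k_n}. *)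
Definition fact_word (V E : Type) (n : nat) (a : nat -> V) (y : nat -> E)
  (k : nat -> int) : list (letter V E) :=
  @LV V E (a 0%N) (k 0%N) :: flatten [seq [:: @LE V E (y i); @LV V E (a i) (k i)] | i <- seq.iota 1 n].

Definition is_G_factorization (V E : finType) (iota tau : E -> V)
  (n : nat) (a : nat -> V) (y : nat -> E) : Prop :=
  (forall i, (1 <= i <= n)%N -> iota (y i) = a i.-1 /\ tau (y i) = a i)
  /\ a n = a 0%N.

(* Main.v *)
Require Import Defs.
From mathcomp Require Import all_boot all_order all_algebra.
From mathcomp Require Import ring.
Import Order.TTheory GRing.Theory Num.Theory.
Local Open Scope ring_scope.

Definition aff := {p : rat * rat | p.1 != 0}.

Definition amul (x y : aff) : aff.
exists ((val x).1 * (val y).1, (val x).1 * (val y).2 + (val x).2).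
by rewrite /= mulf_neq0 //; [case: x | case: y].
Defined.

Definition ainv (x : aff) : aff.
exists ((val x).1^-1, - ((val x).1^-1 * (val x).2)).
by rewrite /= invr_eq0; case: x.
Defined.

Definition aone : aff := exist _ (1, 0) (oner_neq0 _).

Lemma amulA x y z : amul x (amul y z) = amul (amul x y) z.
Proof. apply: val_inj => /=; congr pair; ring. Qed.

Lemma amul1 x : amul aone x = x.
Proof. apply: val_inj; case: x => [[p q] h] /=; congr pair; ring. Qed.

Lemma amulV x : amul (ainv x) x = aone.
Proof.
apply: val_inj; case: x => [[p q] h] /=; congr pair; first by rewrite mulVf.
by rewrite addrN.
Qed.

Definition affG : grp := Grp amulA amul1 amulV.

Definition tr1 : affG := exist _ (1, 1) (oner_neq0 _).

Definition sc (s : rat) : affG :=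
  if (s != 0) =P true is ReflectT h then exist _ (s, 0) h else aone.

Lemma sc_val s : s != 0 -> val (sc s) = (s, 0).
Proof. by rewrite /sc; case: eqP. Qed.

Lemma gexpn_tr1 n : val (gexpn tr1 n) = (1, n%:R).
Proof.
elim: n => [//|n IH].
rewrite /= -[gexpn tr1 n]/(gexpn tr1 n) in IH *.
case: (gexpn tr1 n) IH => [[p q] h] /= [-> ->].
by rewrite !mul1r -addn1 natrD addrC.
Qed.

Lemma gexpz_tr1 (z : int) : val (gexpz tr1 z) = (1, z%:~R).
Proof.
case: z => n /=; first by rewrite gexpn_tr1.
rewrite gexpn_tr1 /=; congr pair.
by rewrite NegzE mulrNz !mul1r -pmulrn -addn1 natrD.
Qed.

Lemma eval_cat (V E : Type) (H : grp) (f : V -> H) (g : E -> H) w1 w2 :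
  eval_word f g (w1 ++ w2) = gmul (eval_word f g w1) (eval_word f g w2).
Proof.
elim: w1 => [|[v z|e] w IH] /=; first by rewrite gmul1.
  by rewrite IH gmulA.
by rewrite IH gmulA.
Qed.

Theorem lemma3p1 (V E : finType) (iota tau : E -> V) (bar : E -> E)
  (alpha beta : E -> int)
  (HG : is_GBS iota tau bar alpha beta)
  (n : nat) (a : nat -> V) (y : nat -> E) (k : nat -> int)
  (Hfac : is_G_factorization iota tau n a y)
  (Hsub : exists m : int,
     F_eq iota tau bar alpha beta (fact_word n a y k) [:: @LV V E (a 0%N) m]) :
  exists K : int,
    (K%:~R : rat) = \sum_(0 <= nu < n.+1)
        (k nu)%:~R * \prod_(1 <= mu < nu.+1)
          ((alpha (y mu))%:~R / (beta (y mu))%:~R)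
    /\ F_eq iota tau bar alpha beta (fact_word n a y k) [:: @LV V E (a 0%N) K].
Proof.
case: Hsub => m Hm; exists m; split => //.
case: HG => _ [Hbb [_ [_ [Hnz Hab]]]].
pose s (e : E) : rat := (alpha e)%:~R / (beta e)%:~R.
have nz e : ((alpha e)%:~R != 0 :> rat) /\ ((beta e)%:~R != 0 :> rat).
  by case: (Hnz e) => h1 h2; rewrite !intr_eq0; split; apply/eqP.
have snz e : s e != 0.
  by case: (nz e) => h1 h2; rewrite /s mulf_neq0 // invr_eq0.
have sbar e : s (bar e) * s e = 1.
  have h : alpha (bar e) = beta e by rewrite Hab Hbb.
  rewrite /s h -(Hab e).
  by case: (nz e) => h1 h2; field; rewrite h1 h2.
have sb e : s e * (beta e)%:~R = (alpha e)%:~R.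
  by case: (nz e) => h1 h2; rewrite /s; field.
have Hmod : F_model iota tau bar alpha beta (fun _ => tr1 : affG) (fun e => sc (s e)).
  split=> e; apply: val_inj => /=.
    by rewrite !sc_val //= sbar mulr0 addr0.
  rewrite gexpz_tr1 /= !sc_val // gexpz_tr1 /=.
  by rewrite !mulr1 mulr0 add0r addr0 mulrC sbar sb.
have Hev : forall N, val (eval_word (fun _ => tr1 : affG) (fun e => sc (s e)) (fact_word N a y k))
  = (\prod_(1 <= mu < N.+1) s (y mu),
     \sum_(0 <= nu < N.+1) (k nu)%:~R * \prod_(1 <= mu < nu.+1) s (y mu)).
  elim=> [|N IH].
    rewrite /= gexpz_tr1 /= big_nat1 big_geq //.
    by rewrite !mul1r add0r mulr1.
  have -> : fact_word N.+1 a y k = fact_word N a y k ++ [:: LE V (y N.+1); LV E (a N.+1) (k N.+1)].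
    have hi : seq.iota 1 N.+1 = seq.iota 1 N ++ [:: N.+1].
      by rewrite -[N.+1]addn1 iotaD addnC.
    by rewrite /fact_word hi map_cat flatten_cat /=.
  rewrite eval_cat; move: IH.
  case: (eval_word _ _ (fact_word N a y k)) => [[p q] h] /= [-> ->].
  rewrite sc_val //= gexpz_tr1 /=.
  rewrite [\sum_(0 <= nu < N.+2) _]big_nat_recr //= [\prod_(1 <= mu < N.+2) _]big_nat_recr //=.
  rewrite !mul1r add0r addr0 mulr1; congr pair.
  by rewrite addrC mulrA mulrC.
have := congr1 (fun x => (val x).2) (Hm _ _ _ Hmod).
rewrite Hev /= gexpz_tr1 /= mul1r add0r => ->.
by [].
Qed.
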